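(* Fix the parameters $S_1,\dots,S_{\mathcal K}$, $\lambda_1,\dots,\lambda_{\mathcal K}$ of the storage model in the context. Suppose that the linear system \[ \sum_{j=1}^{\kappa_i}\alpha_{ij}=\lambda_i\ (i=1,\dots,\mathcal K),\qquad \sum_{i=1}^{\mathcal K}\sum_{j=1}^{\kappa_i}\alpha_{ij}\,\delta_{\ell,s^i_j}=\tfrac1n\ (\ell=1,\dots,n) \] has no non-negative solution $(\alpha_{ij})$. Then for any routing policy $P$, the shape process $\tilde X(t)$ with routing policy $P$ is transient.
   Context: Storage model: there are $n$ nodes $\{1,\dots,n\}$ and $\mathcal K\ge1$ non-empty neighborhoods $S_1,\dots,S_{\mathcal K}\subset\{1,\dots,n\}$ with $\bigcup_i S_i=\{1,\dots,n\}$; $\kappa_i=|S_i|$ and $S_i=\{s^i_1,\dots,s^i_{\kappa_i}\}$. Items arrive at $S_i$ as independent Poisson processes with rates $\lambda_i>0$, $\sum_{i=1}^{\mathcal K}\lambda_i=1$. Let $\Lambda_i=\{p\in\mathbb R^{\kappa_i}:p_j\ge0,\sum_j p_j=1\}$. A routing policy is a map $P:\mathbb N^n\to\Lambda_1\times\dots\times\Lambda_{\mathcal K}$ with $P(x+c\mathbf 1)=P(x)$ for all integers $c$; an item arriving at $S_i$ when the configuration is $x$ is stored at node $s^i_j$ with probability $p^{(i)}_j(x)$, independently for each arrival. $X(t)$ is the vector of node loads, $M(t)=\frac1n\sum_iX_i(t)$, the shape is $\tilde X(t)=X(t)-M(t)\mathbf 1$, and $\tilde X^e(m)$ is the shape observed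 at successive arrival moments. With $\tau=\inf\{m>0:\tilde X^e(m)=0\}$, the process is called transient if $\mathbf P(\tau=\infty\mid\tilde X^e(0)=0)>0$. $\delta_{\ell,m}$ is the Kronecker delta. *)

(* Defs.v *)
From HB Require Import structures.
From mathcomp Require Import all_boot all_order all_algebra.
From mathcomp Require Import reals.
Set Implicit Arguments. Unset Strict Implicit. Unset Printing Implicit Defensive.
Import Order.TTheory GRing.Theory Num.Theory.
Local Open Scope ring_scope.

(* A load configuration: nodes are 'I_n (node l stands for l+1 in the paper). *)
Definition config (n : nat) := {ffun 'I_n -> nat}.

Definition config0 (n : nat) : config n := [ffun => 0%N].

Definition incr (n : nat) (x : config n) (l : 'I_n) : config n :=
  [ffun k => (x k + (k == l))%N].

(* the shape X - M 1 of x is 0 iff all loads are equal *)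
Definition balanced (n : nat) (x : config n) : bool :=
  [forall a, forall b, x a == x b].

(* Probability that the next arrival (at an arrival moment) is stored at node l,
   given configuration x: the arrival is at neighborhood S_i w.p. lam i
   (competing independent Poisson processes of total rate 1), and is then
   stored at s i j w.p. P x i j. *)
Definition route_prob (R : realType) (n K : nat) (kappa : 'I_K -> nat)
  (s : forall i : 'I_K, 'I_(kappa i) -> 'I_n) (lam : 'I_K -> R)
  (P : config n -> forall i : 'I_K, 'I_(kappa i) -> R)
  (x : config n) (l : 'I_n) : R :=
  \sum_(i < K) lam i * \sum_(j < kappa i) P x i j * (s i j == l)%:R.

Fixpoint path_prob (R : realType) (n : nat) (q : config n -> 'I_n -> R)
  (x : config n) (w : seq 'I_n) : R :=
  match w with
  | [::] => 1
  | l :: w' => q x l * path_prob q (incr x l) w'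
  end.

Fixpoint hits (n : nat) (x : config n) (w : seq 'I_n) : bool :=
  match w with
  | [::] => false
  | l :: w' => balanced (incr x l) || hits (incr x l) w'
  end.

(* P(tau <= m | shape at time 0 is 0) for the embedded chain, started from the
   load vector 0 (any constant vector gives the same law by shift invariance). *)
Definition return_prob (R : realType) (n : nat) (q : config n -> 'I_n -> R)
  (m : nat) : R :=
  \sum_(w : m.-tuple 'I_n) path_prob q (config0 n) w * (hits (config0 n) w)%:R.

(* transience: P(tau = oo | shape 0) = 1 - sup_m P(tau <= m) > 0 *)
Definition transient (R : realType) (n : nat) (q : config n -> 'I_n -> R) : Prop :=
  exists2 eps : R, 0 < eps & forall m : nat, return_prob q m <= 1 - eps.

(* Main.v *)
Require Import Defs.
From HB Require Import structures.
From mathcomp Require Import all_boot all_order all_algebra.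
From mathcomp Require Import all_classical all_reals all_analysis.
From mathcomp Require Import ring lra.
Import Order.TTheory GRing.Theory Num.Theory.
Local Open Scope ring_scope.
Section Walk.
Variables (R : realType) (n : nat) (q : config n -> 'I_n -> R).
Hypothesis q_ge0 : forall x l, 0 <= q x l.
Hypothesis q_sum1 : forall x, \sum_l q x l = 1.

Lemma sum_tupleS (F : seq 'I_n -> R) m :
  \sum_(w : m.+1.-tuple 'I_n) F w = \sum_(l : 'I_n) \sum_(w : m.-tuple 'I_n) F (l :: w).
Proof.
rewrite pair_big /=.
rewrite (reindex (fun p : 'I_n * m.-tuple 'I_n => [tuple of p.1 :: p.2])) /=; first by [].
exists (fun w : m.+1.-tuple 'I_n => (thead w, [tuple of behead w])) => [[l w]|w] _ /=.
  by rewrite theadE; congr pair; apply/val_inj.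
by rewrite [RHS]tuple_eta.
Qed.

Lemma path_prob_sum m x : \sum_(w : m.-tuple 'I_n) path_prob q x w = 1.
Proof.
elim: m x => [|m IH] x.
  by rewrite (big_pred1 [tuple]) // => w; apply/esym/eqP; exact: tuple0.
rewrite sum_tupleS -(q_sum1 x); apply: eq_bigr => l _ /=.
by rewrite -mulr_sumr IH mulr1.
Qed.

Definition H m x := \sum_(w : m.-tuple 'I_n) path_prob q x w * (hits x w)%:R.

Lemma H0 x : H 0 x = 0.
Proof. by rewrite /H big1 // => w _; rewrite [w]tuple0 /= mulr0. Qed.

Lemma HS m x : H m.+1 x =
  \sum_l q x l * (if balanced (incr x l) then 1 else H m (incr x l)).
Proof.
rewrite /H (sum_tupleS (fun w => path_prob q x w * (hits x w)%:R)); apply: eq_bigr => l _ /=.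
case: ifP => b /=.
  rewrite -[in RHS](path_prob_sum m (incr x l)) mulr_sumr; apply: eq_bigr => w _.
  by rewrite mulr1.
by rewrite mulr_sumr; apply: eq_bigr => w _; rewrite mulrA.
Qed.

Variables (v : 'I_n -> R) (d : R).
Hypothesis v_sum0 : \sum_l v l = 0.
Hypothesis d_gt0 : 0 < d.
Hypothesis drift : forall x, d <= \sum_l q x l * v l.

Definition Y (x : config n) := \sum_l v l * (x l)%:R.

Lemma Y_incr x l : Y (incr x l) = Y x + v l.
Proof.
rewrite /Y (bigD1 l) //= [in RHS](bigD1 l) //= ffunE eqxx natrD mulrDr -!addrA; congr (_ + _).
rewrite addrC mulr1; congr (_ + _); apply: eq_bigr => k kl; rewrite ffunE (negbTE kl) addn0 //.
Qed.

Lemma Y_bal x : balanced x -> Y x = 0.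
Proof.
move=> bx; case: (pickP (@predT 'I_n)) => [l0 _|h]; last by rewrite /Y big_pred0.
rewrite /Y (eq_bigr (fun l => v l * (x l0)%:R)) => [|l _]; first by rewrite -mulr_suml v_sum0 mul0r.
by move/forallP: bx => /(_ l)/forallP/(_ l0)/eqP ->.
Qed.

Lemma Y0 : Y (config0 n) = 0.
Proof. by rewrite /Y big1 // => l _; rewrite ffunE mulr0. Qed.

Definition B := d + \sum_l `|v l|.
Definition th := d / (4 * B ^+ 2).
Definition eps := th * d / 2.

Lemma B_gt0 : 0 < B.
Proof. by rewrite /B ltr_wpDr // sumr_ge0. Qed.

Lemma vB l : `|v l| <= B - d.
Proof.
rewrite /B [d + _]addrC addrK (bigD1 l) //= lerDl sumr_ge0 //.
Qed.

Lemma exp_bound (z : R) : `|z| <= 1/2 -> expR (- z) <= 1 - z + 2 * z ^+ 2.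
Proof.
move=> /[dup] hz; rewrite ler_norml => /andP [h1 h2].
have p : 0 < 1 + z by lra.
rewrite expRN; apply: (@le_trans _ _ (1 + z)^-1).
  by rewrite lef_pV2 ?posrE ?expR_gt0 // expR_ge1Dx.
rewrite -[leLHS]mul1r ler_pdivrMr //.
have : 0 <= z ^+ 2 * (1 + 2 * z) by rewrite mulr_ge0 ?sqr_ge0 //; lra.
nra.
Qed.

Lemma th_gt0 : 0 < th.
Proof. by rewrite /th divr_gt0 // mulr_gt0 // exprn_gt0 // B_gt0. Qed.

Lemma d_leB : d <= B.
Proof. by rewrite /B lerDl sumr_ge0. Qed.

Lemma thB : th * B <= 1/4.
Proof.
have hB := B_gt0; have hd := d_leB.
rewrite /th mulrAC ler_pdivrMr ?mulr_gt0 ?exprn_gt0 // expr2; nra.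
Qed.

Lemma eps_gt0 : 0 < eps.
Proof. by rewrite /eps divr_gt0 // mulr_gt0 // th_gt0. Qed.

Lemma eps_le1 : eps <= 1.
Proof.
have := thB; have := th_gt0; have := d_leB; have := B_gt0 => hB hd ht htB.
have : th * d <= th * B by rewrite ler_pM2l.
rewrite /eps; lra.
Qed.

Lemma E_bound x : \sum_l q x l * expR (- (th * v l)) <= 1 - eps.
Proof.
have hB := B_gt0; have ht := th_gt0.
have [c hc0] : exists c, c = 2 * th ^+ 2 * B ^+ 2 by eexists.
have hc : c = th * d / 2.
  by rewrite hc0 /th; field; rewrite gt_eqF.
apply: (@le_trans _ _ (\sum_l (q x l * (1 + c) - th * (q x l * v l)))).
  apply: ler_sum => l _.
  have hvl := vB l.
  have hvB : `|v l| <= B.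
    by apply: le_trans hvl _; rewrite lerBlDr lerDl ltW.
  have htv : `|th * v l| <= th * B.
    by rewrite normrM gtr0_norm // ler_pM2l.
  have hv : `|th * v l| <= 1/2.
    by apply: le_trans htv _; apply: le_trans thB _; lra.
  apply: (le_trans (ler_wpM2l (q_ge0 x l) (exp_bound _ hv))).
  have h2 : (th * v l) ^+ 2 <= th ^+ 2 * B ^+ 2.
    move: htv; rewrite ler_norml => /andP [a1 a2]; nra.
  have h3 : 0 <= q x l * (c - 2 * (th * v l) ^+ 2).
    by rewrite mulr_ge0 // subr_ge0 hc0 -mulrA ler_pM2l.
  have -> : q x l * (1 + c) - th * (q x l * v l) =
     q x l * (1 - th * v l + 2 * (th * v l) ^+ 2) + q x l * (c - 2 * (th * v l) ^+ 2) by ring.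
  by rewrite lerDl.
rewrite sumrB -mulr_suml q_sum1 mul1r -mulr_sumr hc.
have := drift x; have hd := d_gt0 => hdr.
have : th * d <= th * \sum_l q x l * v l by rewrite ler_pM2l.
rewrite /eps; lra.
Qed.

Lemma H_bound m x : H m x <= expR (- (th * Y x)) * (1 - eps).
Proof.
have he := eps_gt0; have he1 := eps_le1.
elim: m x => [|m IH] x.
  by rewrite H0 mulr_ge0 // ?expR_ge0 // subr_ge0.
rewrite HS; apply: (@le_trans _ _ (\sum_l q x l * expR (- (th * Y (incr x l))))).
  apply: ler_sum => l _; rewrite ler_wpM2l //.
  case: ifP => b; first by rewrite Y_bal // mulr0 oppr0 expR0.
  apply: le_trans (IH _) _; rewrite ler_piMr ?expR_ge0 //; lra.
rewrite (eq_bigr (fun l => expR (- (th * Y x)) * (q x l * expR (- (th * v l))))).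
  by rewrite -mulr_sumr ler_wpM2l ?expR_ge0 // E_bound.
by move=> l _; rewrite Y_incr mulrDr opprD expRD mulrCA.
Qed.

Lemma walk_transient : transient q.
Proof.
exists eps; first exact: eps_gt0.
move=> m; have := H_bound m (config0 n).
by rewrite Y0 mulr0 oppr0 expR0 mul1r.
Qed.
End Walk.
Import numFieldNormedType.Exports.
Local Open Scope classical_set_scope.
Local Open Scope ring_scope.

Lemma quad_ge0 (R : realType) (X Y : R) :
  (forall t : R, 0 < t -> t <= 1 -> 0 <= 2 * t * X + t ^+ 2 * Y) -> 0 <= X.
Proof.
move=> h; rewrite leNgt; apply/negP => hX.
have h1 := h 1 ltr01 (lexx 1).
have hY : 0 < Y by move: h1; rewrite expr1n; lra.
pose t := - X / Y.
have htY : t * Y = - X by rewrite /t mulfVK // gt_eqF.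
have ht0 : 0 < t by rewrite /t divr_gt0 // oppr_gt0.
have ht1 : t <= 1 by rewrite /t ler_pdivrMr // mul1r; move: h1; rewrite expr1n; lra.
have := h t ht0 ht1.
have -> : 2 * t * X + t ^+ 2 * Y = t * X by rewrite expr2 -[t * t * Y]mulrA htY; ring.
by rewrite leNgt pmulr_rlt0 // hX.
Qed.

Section Cont.
Variables (R : realType) (N : nat).
Lemma cont_sum (I : finType) (F : I -> 'rV[R]_N -> R) :
  (forall i, continuous (F i)) -> continuous (fun w => \sum_i F i w).
Proof.
move=> h.
suff : forall r : seq I, continuous (fun w => \sum_(i <- r) F i w) by apply.
elim=> [|a r IH].
  have -> : (fun w => \sum_(i <- [::]) F i w) = fun=> 0 by apply/funext => w; rewrite big_nil.
  exact: cst_continuous.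
have -> : (fun w => \sum_(i <- a :: r) F i w) = (F a + fun w => \sum_(i <- r) F i w).
  by apply/funext => w; rewrite big_cons.
by move=> x; apply: continuousD; [apply: h | apply: IH].
Qed.

Lemma cont_mul (f g : 'rV[R]_N -> R) : continuous f -> continuous g ->
  continuous (fun w => f w * g w).
Proof. by move=> cf cg x; apply: continuousM; [apply: cf|apply: cg]. Qed.

Lemma cont_sub (f g : 'rV[R]_N -> R) : continuous f -> continuous g ->
  continuous (fun w => f w - g w).
Proof. by move=> cf cg x; apply: continuousB; [apply: cf|apply: cg]. Qed.

Lemma cont_coord k : continuous (fun w : 'rV[R]_N => w ord0 k).
Proof. exact: coord_continuous. Qed.
End Cont.
Section Sep.
Variables (R : realType) (n K : nat) (kappa : 'I_K -> nat)
  (s : forall i : 'I_K, 'I_(kappa i) -> 'I_n) (lam : 'I_K -> R).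
Hypothesis lam_ge0 : forall i, 0 <= lam i.
Hypothesis lam_sum : \sum_(i < K) lam i = 1.

Definition Adm (alpha : forall i : 'I_K, 'I_(kappa i) -> R) :=
  (forall i j, 0 <= alpha i j) /\ (forall i, \sum_(j < kappa i) alpha i j = lam i).
Definition Phi (alpha : forall i : 'I_K, 'I_(kappa i) -> R) (l : 'I_n) :=
  \sum_(i < K) \sum_(j < kappa i) alpha i j * (l == s i j)%:R.
Definition gg (alpha : forall i : 'I_K, 'I_(kappa i) -> R) :=
  \sum_(l < n) (Phi alpha l - n%:R^-1) ^+ 2.

Definition TT := {i : 'I_K & 'I_(kappa i)}.
Definition NN := #|{: TT}|.
Definition co (w : 'rV[R]_NN) : forall i : 'I_K, 'I_(kappa i) -> R :=
  fun i j => w ord0 (enum_rank (Tagged (fun i => 'I_(kappa i)) j)).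
Definition ofA (alpha : forall i : 'I_K, 'I_(kappa i) -> R) : 'rV[R]_NN :=
  \row_k alpha (tag (enum_val k)) (tagged (enum_val k)).

Lemma coK alpha i j : co (ofA alpha) i j = alpha i j.
Proof. by rewrite /co /ofA mxE enum_rankK. Qed.

Lemma lam_le1 i : lam i <= 1.
Proof. by rewrite -lam_sum (bigD1 i) //= lerDl sumr_ge0. Qed.

Definition DD := [set w : 'rV[R]_NN | (forall t : TT, 0 <= w ord0 (enum_rank t)) /\
   (forall i, \sum_(j < kappa i) co w i j = lam i)].

Lemma DD_Adm w : DD w -> Adm (co w).
Proof. by move=> [h1 h2]; split => // i j; apply: h1. Qed.

Lemma Adm_DD alpha : Adm alpha -> DD (ofA alpha).
Proof.
move=> [h1 h2]; split => [[i j]|i]; first by rewrite mxE enum_rankK.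
by under eq_bigr do rewrite coK.
Qed.

Lemma DD_closed : closed DD.
Proof.
have -> : DD = (\bigcap_(t in setT) [set w : 'rV[R]_NN | 0 <= w ord0 (enum_rank t)]) `&`
   (\bigcap_(i in setT) [set w : 'rV[R]_NN | \sum_(j < kappa i) co w i j = lam i]).
  rewrite predeqE => w; split => [[h1 h2]|[h1 h2]]; split => x.
  - by move=> _; exact: h1.
  - by move=> _; exact: h2.
  - exact: h1.
  - exact: h2.
apply: closedI; apply: closed_bigI => t _.
  apply: (@preimage_closed _ _ (fun w : 'rV[R]_NN => w ord0 (enum_rank t)) [set x | 0 <= x]).
    by move=> x _; apply: cont_coord.
  exact: closed_ge.
apply: (@preimage_closed _ _ (fun w : 'rV[R]_NN => \sum_(j < kappa t) co w t j) [set x | x = lam t]).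
  by move=> x _; apply: cont_sum => j; apply: cont_coord.
exact: closed_eq.
Qed.

Lemma DD_compact : compact DD.
Proof.
have hB := (@rV_compact R NN (fun=> `[0, 1]%classic) (fun=> @segment_compact R 0 1)).
apply: (subclosed_compact DD_closed hB).
move=> w [h1 h2] k /=; rewrite in_itv /=.
rewrite -(enum_valK k); case: (enum_val k) => i j.
apply/andP; split; first exact: h1.
apply: (le_trans _ (lam_le1 i)); rewrite -(h2 i) (bigD1 j) //= lerDl sumr_ge0 // => j' _.
exact: h1.
Qed.

Lemma gg_cont : continuous (fun w : 'rV[R]_NN => gg (co w)).
Proof.
apply: cont_sum => l; rewrite /gg.
have hP : continuous (fun w : 'rV[R]_NN => Phi (co w) l - n%:R^-1).
  apply: cont_sub; last exact: cst_continuous.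
  apply: cont_sum => i; apply: cont_sum => j.
  by apply: cont_mul; [apply: cont_coord|apply: cst_continuous].
have -> : (fun w : 'rV[R]_NN => (Phi (co w) l - n%:R^-1) ^+ 2) =
          (fun w => (Phi (co w) l - n%:R^-1) * (Phi (co w) l - n%:R^-1)).
  by apply/funext => w; rewrite expr2.
exact: cont_mul.
Qed.

Lemma minimizer : (exists alpha, Adm alpha) ->
  exists2 am, Adm am & forall alpha, Adm alpha -> gg am <= gg alpha.
Proof.
move=> [a0 ha0].
have ne : DD !=set0 by exists (ofA a0); apply: Adm_DD.
have cf : {within DD, continuous (fun w => gg (co w))}.
  by apply: continuous_subspaceT; exact: gg_cont.
have [c cD cmin] := EVT_min_rV ne DD_compact cf.
exists (co c); first by apply: DD_Adm; rewrite -inE.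
move=> alpha ha.
have := cmin (ofA alpha); rewrite inE => /(_ (Adm_DD _ ha)).
have -> : co (ofA alpha) = alpha.
  by apply: functional_extensionality_dep => i; apply/funext => j; exact: coK.
by [].
Qed.

Lemma separation (A0 : exists alpha, Adm alpha)
  (nosol : ~ exists alpha : forall i : 'I_K, 'I_(kappa i) -> R,
      [/\ forall i j, 0 <= alpha i j,
          forall i, \sum_(j < kappa i) alpha i j = lam i &
          forall l : 'I_n, Phi alpha l = n%:R^-1]) :
  exists a : 'I_n -> R, exists2 del, 0 < del &
    forall alpha, Adm alpha -> del <= \sum_l a l * (Phi alpha l - n%:R^-1).
Proof.
have [am [am0 am1] amin] := minimizer A0.
pose a l := Phi am l - n%:R^-1.
exists a, (gg am).
  rewrite lt_def sumr_ge0 ?andbT => [|l _]; last exact: sqr_ge0.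
  apply/eqP => h; apply: nosol; exists am; split => // l.
  have := @psumr_eq0P _ _ _ _ (fun l _ => sqr_ge0 (Phi am l - n%:R^-1)) h l isT.
  by move/eqP; rewrite sqrf_eq0 subr_eq0 => /eqP.
move=> alpha [ha0 ha1].
pose b l := Phi alpha l - Phi am l.
have lin t l : Phi (fun i j => am i j + t * (alpha i j - am i j)) l = Phi am l + t * b l.
  rewrite /b /Phi -sumrB mulr_sumr -big_split /=; apply: eq_bigr => i _.
  rewrite -sumrB mulr_sumr -big_split; apply: eq_bigr => j _ /=; ring.
have adm t : 0 <= t -> t <= 1 -> Adm (fun i j => am i j + t * (alpha i j - am i j)).
  move=> t0 t1; split => [i j|i].
    have := am0 i j; have := ha0 i j => h1 h2.
    have -> : am i j + t * (alpha i j - am i j) = (1 - t) * am i j + t * alpha i j by ring.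
    by rewrite addr_ge0 // mulr_ge0 // subr_ge0.
  by rewrite big_split /= -mulr_sumr sumrB am1 ha1 subrr mulr0 addr0.
have key : forall t : R, 0 < t -> t <= 1 ->
    0 <= 2 * t * (\sum_l a l * b l) + t ^+ 2 * \sum_l b l ^+ 2.
  move=> t t0 t1; have := amin _ (adm t (ltW t0) t1); rewrite /gg.
  under [X in _ <= X]eq_bigr do rewrite lin.
  have -> : \sum_l (Phi am l + t * b l - n%:R^-1) ^+ 2 =
     \sum_l (Phi am l - n%:R^-1) ^+ 2 +
       (2 * t * (\sum_l a l * b l) + t ^+ 2 * \sum_l b l ^+ 2).
    rewrite !mulr_sumr -!big_split; apply: eq_bigr => l _; rewrite /a /=; ring.
  by rewrite lerDl.
have X0 := @quad_ge0 _ _ _ key.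
have -> : \sum_l a l * (Phi alpha l - n%:R^-1) = gg am + \sum_l a l * b l.
  rewrite /gg -big_split; apply: eq_bigr => l _; rewrite /a /b /=; ring.
by rewrite lerDl.
Qed.
End Sep.

Local Close Scope classical_set_scope.
Local Open Scope ring_scope.

Theorem corollary2p1 (R : realType) (n K : nat) (kappa : 'I_K -> nat)
  (s : forall i : 'I_K, 'I_(kappa i) -> 'I_n) (lam : 'I_K -> R)
  (HK : (0 < K)%N)
  (Hkappa : forall i, (0 < kappa i)%N)
  (Hs_inj : forall i, injective (s i))
  (Hcover : forall l : 'I_n, exists i, exists j, s i j = l)
  (Hlam_pos : forall i, 0 < lam i)
  (Hlam_sum : \sum_(i < K) lam i = 1)
  (Hnosol : ~ exists alpha : forall i : 'I_K, 'I_(kappa i) -> R,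
      [/\ forall i j, 0 <= alpha i j,
          forall i, \sum_(j < kappa i) alpha i j = lam i &
          forall l : 'I_n,
            \sum_(i < K) \sum_(j < kappa i) alpha i j * (l == s i j)%:R
              = n%:R^-1])
  (P : config n -> forall i : 'I_K, 'I_(kappa i) -> R)
  (HP_nonneg : forall x i j, 0 <= P x i j)
  (HP_sum : forall x i, \sum_(j < kappa i) P x i j = 1)
  (HP_shift : forall (x : config n) (c : nat) i j,
      P [ffun k => (x k + c)%N] i j = P x i j) :
  transient (route_prob s lam P).
Proof.
pose i0 := Ordinal HK.
have n0 : (0 < n)%N := leq_ltn_trans (leq0n _) (ltn_ord (s i0 (Ordinal (Hkappa i0)))).
have lam_ge0 i : 0 <= lam i := ltW (Hlam_pos i).
pose alx (x : config n) := fun i (j : 'I_(kappa i)) => lam i * P x i j.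
have admx x : Adm R K kappa lam (alx x).
  split => [i j|i]; first by rewrite mulr_ge0.
  by rewrite -mulr_sumr HP_sum mulr1.
have [a [del del0 hsep]] :=
  @separation R n K kappa s lam lam_ge0 Hlam_sum (ex_intro _ _ (admx (config0 n))) Hnosol.
pose q := route_prob s lam P.
have q_ge0 x l : 0 <= q x l.
  apply: sumr_ge0 => i _; rewrite mulr_ge0 // sumr_ge0 // => j _.
  by rewrite mulr_ge0 ?ler0n.
have sum_ind i j : \sum_l (s i j == l)%:R = 1 :> R.
  rewrite (bigD1 (s i j)) //= eqxx big1 ?addr0 // => k hk.
  by rewrite eq_sym (negbTE hk).
have q_sum1 x : \sum_l q x l = 1.
  rewrite /q /route_prob exchange_big /= -[RHS]Hlam_sum; apply: eq_bigr => i _.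
  rewrite -mulr_sumr exchange_big /= -[RHS]mulr1 -[in RHS](HP_sum x i); congr (_ * _).
  by apply: eq_bigr => j _; rewrite -mulr_sumr sum_ind mulr1.
have qPhi x l : q x l = Phi R n K kappa s (alx x) l.
  rewrite /q /route_prob /Phi; apply: eq_bigr => i _; rewrite mulr_sumr.
  by apply: eq_bigr => j _; rewrite /alx mulrA eq_sym.
pose v l := a l - n%:R^-1 * \sum_k a k.
have v_sum0 : \sum_l v l = 0.
  rewrite sumrB sumr_const card_ord.
  have -> : n%:R^-1 * (\sum_k a k) *+ n = \sum_k a k.
    rewrite -mulr_natl mulrA mulfV ?mul1r // pnatr_eq0 -lt0n //.
  by rewrite subrr.
have drift x : del <= \sum_l q x l * v l.
  have := hsep _ (admx x).
  have -> : \sum_l q x l * v l = \sum_l a l * (Phi R n K kappa s (alx x) l - n%:R^-1).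
    under [RHS]eq_bigr do rewrite -qPhi.
    rewrite /v; under [LHS]eq_bigr do rewrite mulrBr; under [RHS]eq_bigr do rewrite mulrBr.
    rewrite !sumrB -!mulr_suml q_sum1 mul1r.
    by congr (_ - _); [apply: eq_bigr => l _; exact: mulrC | exact: mulrC].
  by [].
exact: (@walk_transient R n q q_ge0 q_sum1 v del v_sum0 del0 drift).
Qed.
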